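(* Let $\mathcal{T}_S,\mathcal{T}_B$ be propositional theories, $V_A$ a set of propositional variables, and let $\langle\mathcal{T}^l,\mathcal{T}^u\rangle$ be an $\alpha$-abstraction from $\mathcal{T}_S$ with respect to $\mathcal{T}_B$ over $V_A$ which is exact, i.e. $\mathcal{T}_B\models\mathcal{T}^l\equiv\mathcal{T}^u$. Then $\langle\mathcal{T}^l,\mathcal{T}^u\rangle$ is the tightest abstraction: $\mathcal{T}_B\models \mathcal{T}^l\equiv \mathrm{wsc}(\mathcal{T}_S;\mathcal{T}_B;V_A)$ and $\mathcal{T}_B\models \mathcal{T}^u\equiv \mathrm{snc}(\mathcal{T}_S;\mathcal{T}_B;V_A)$; in particular for every formula $C$ over $V_A$, $\mathcal{T}_B\models C\to\mathcal{T}_S$ iff $\mathcal{T}_B\models C\to\mathcal{T}^l$, and for every formula $D$ over $V_A$, $\mathcal{T}_B\models\mathcal{T}_S\to D$ iff $\mathcal{T}_B\models \mathcal{T}^u\to D$.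
   Context: Classical propositional logic. A theory is a finite set of propositional formulas, identified with the conjunction of its elements (the empty theory is identified with $\top$). A formula is ''over'' a set $W$ of propositional variables if all variables occurring in it belong to $W$. $\mathcal{T}\models B$ means every truth assignment to the variables involved that satisfies $\mathcal{T}$ also satisfies $B$. Propositional quantifiers are abbreviations: $\exists p\,B := B[p:=\bot]\lor B[p:=\top]$ and $\forall p\,B := B[p:=\bot]\land B[p:=\top]$; for a finite set $V=\{p_1,\dots,p_k\}$, $\exists V$ and $\forall V$ denote iterated quantifiers. For formulas $A,\mathcal{T}$ and a set $W$ of variables, let $V$ be the set of variables occurring in $A$ or $\mathcal{T}$ but not in $W$, and define $\mathrm{snc}(A;\mathcal{T};W):=\exists V(\mathcal{T}\land A)$ and $\mathrm{wsc}(A;\mathcal{T};W):=\forall V(\mathcal{T}\to A)$. An $\alpha$-abstraction from $\mathcal{T}_S$ with respect to $\mathcal{T}_B$ over $V_A$ is a pair $\langle\mathcal{T}^l,\mathcal{T}^u\rangle$ of theories over $V_A$ such that (a) for every formula $C$ over $V_A$: if $\mathcal{T}_B\models C\to\mathcal{T}^l$ then $\mathcal{T}_B\models C\to\mathcal{T}_S$; and (b) for every formula $D$ over $V_A$: if $\mathcal{T}_B\models \mathcal{T}^u\to D$ then $\mathcal{T}_B\models\mathcal{T}_S\to D$. *)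

(* Defs.v *)
From Stdlib Require Import List Bool Arith.
Import ListNotations.

Inductive form : Type :=
| Var : nat -> form
| Bot : form
| Top : form
| Neg : form -> form
| And : form -> form -> form
| Or  : form -> form -> form
| Imp : form -> form -> form
| Iff : form -> form -> form.

Fixpoint eval (v : nat -> bool) (f : form) : bool :=
  match f with
  | Var p => v p
  | Bot => false
  | Top => true
  | Neg a => negb (eval v a)
  | And a b => eval v a && eval v b
  | Or a b => eval v a || eval v b
  | Imp a b => implb (eval v a) (eval v b)
  | Iff a b => Bool.eqb (eval v a) (eval v b)
  end.

Fixpoint vars (f : form) : list nat :=
  match f with
  | Var p => [p]
  | Bot | Top => []
  | Neg a => vars a
  | And a b | Or a b | Imp a b | Iff a b => vars a ++ vars b
  end.

Definition theory := list form.
Definition thy (T : theory) : form := fold_right And Top T.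

Definition varset := nat -> bool.

Definition over (W : varset) (f : form) : Prop :=
  forall p, In p (vars f) -> W p = true.
Definition theory_over (W : varset) (T : theory) : Prop :=
  forall f, In f T -> over W f.

Definition models (T B : form) : Prop :=
  forall v : nat -> bool, eval v T = true -> eval v B = true.

Fixpoint subst (p : nat) (c : form) (f : form) : form :=
  match f with
  | Var q => if Nat.eqb p q then c else Var q
  | Bot => Bot
  | Top => Top
  | Neg a => Neg (subst p c a)
  | And a b => And (subst p c a) (subst p c b)
  | Or a b => Or (subst p c a) (subst p c b)
  | Imp a b => Imp (subst p c a) (subst p c b)
  | Iff a b => Iff (subst p c a) (subst p c b)
  end.

(* Propositional quantifiers as abbreviations. *)
Definition ex1 (p : nat) (B : form) : form := Or (subst p Bot B) (subst p Top B).
Definition all1 (p : nat) (B : form) : form := And (subst p Bot B) (subst p Top B).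
Definition exV (V : list nat) (B : form) : form := fold_right ex1 B V.
Definition allV (V : list nat) (B : form) : form := fold_right all1 B V.

Definition elimvars (A T : form) (W : varset) : list nat :=
  filter (fun p => negb (W p)) (nodup Nat.eq_dec (vars A ++ vars T)).

Definition snc (A T : form) (W : varset) : form :=
  exV (elimvars A T W) (And T A).
Definition wsc (A T : form) (W : varset) : form :=
  allV (elimvars A T W) (Imp T A).

Definition alpha_abstraction (TS TB : theory) (VA : varset) (Tl Tu : theory) : Prop :=
  theory_over VA Tl /\ theory_over VA Tu /\
  (forall C : form, over VA C ->
     models (thy TB) (Imp C (thy Tl)) -> models (thy TB) (Imp C (thy TS))) /\
  (forall D : form, over VA D ->
     models (thy TB) (Imp (thy Tu) D) -> models (thy TB) (Imp (thy TS) D)).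

(* Main.v *)
Require Import Defs.
From Stdlib Require Import List Bool Arith.
Import ListNotations.

Definition upd (v : nat -> bool) (p : nat) (b : bool) : nat -> bool :=
  fun q => if Nat.eqb p q then b else v q.

Lemma eval_subst v p c f :
  eval v (subst p c f) = eval (upd v p (eval v c)) f.
Proof.
  induction f; simpl; try rewrite IHf; try rewrite IHf1, IHf2; auto.
  unfold upd. destruct (Nat.eqb p n); reflexivity.
Qed.

Lemma eval_agree v w f :
  (forall p, In p (vars f) -> v p = w p) -> eval v f = eval w f.
Proof.
  induction f; simpl; intros H; auto;
  try (rewrite IHf; auto);
  try (rewrite IHf1, IHf2; auto; intros; apply H; apply in_or_app; auto).
Qed.

Definition agree_out (V : list nat) (v w : nat -> bool) :=
  forall q, ~ In q V -> w q = v q.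

Lemma allV_sem V : forall B v,
  eval v (allV V B) = true <-> (forall w, agree_out V v w -> eval w B = true).
Proof.
  induction V as [|p V IH]; intros B v; simpl.
  - split; intros H.
    + intros w Hw. rewrite (eval_agree w v); auto.
    + apply H. intros q _; reflexivity.
  - unfold all1. simpl. rewrite !eval_subst. simpl.
    split; intros H.
    + apply andb_true_iff in H as [H0 H1].
      intros w Hw.
      assert (Hv : eval (upd v p (w p)) (allV V B) = true)
        by (destruct (w p); auto).
      apply (proj1 (IH B _) Hv). intros q Hq. unfold upd.
      destruct (Nat.eqb p q) eqn:E.
      * apply Nat.eqb_eq in E; subst; auto.
      * apply Hw. intros [E'|E']; [subst; rewrite Nat.eqb_refl in E; discriminate|auto].
    + apply andb_true_iff; split; apply (proj2 (IH B _)); intros w Hw; apply H;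
      intros q Hq; rewrite Hw by (intro; apply Hq; right; auto); unfold upd;
      destruct (Nat.eqb p q) eqn:E; auto;
      apply Nat.eqb_eq in E; subst; exfalso; apply Hq; left; auto.
Qed.

Lemma exV_sem V : forall B v,
  eval v (exV V B) = true <-> (exists w, agree_out V v w /\ eval w B = true).
Proof.
  induction V as [|p V IH]; intros B v; simpl.
  - split; intros H.
    + exists v; split; auto. intros q _; auto.
    + destruct H as [w [Hw H]]. rewrite (eval_agree v w); auto.
      intros q _. symmetry; apply Hw; auto.
  - unfold ex1. simpl. rewrite !eval_subst. simpl.
    split; intros H.
    + apply orb_true_iff in H as [H|H]; apply IH in H as [w [Hw H]];
      exists w; split; auto; intros q Hq; rewrite Hw by (intro; apply Hq; right; auto);
      unfold upd; destruct (Nat.eqb p q) eqn:E; auto;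
      apply Nat.eqb_eq in E; subst; exfalso; apply Hq; left; auto.
    + destruct H as [w [Hw H]].
      assert (Hv : eval (upd v p (w p)) (exV V B) = true).
      { apply IH. exists w. split; auto. intros q Hq. unfold upd.
        destruct (Nat.eqb p q) eqn:E.
        * apply Nat.eqb_eq in E; subst; auto.
        * apply Hw. intros [E'|E']; [subst; rewrite Nat.eqb_refl in E; discriminate|auto]. }
      apply orb_true_iff. destruct (w p); auto.
Qed.

Lemma thy_over VA T : theory_over VA T -> over VA (thy T).
Proof.
  induction T as [|f T IH]; intros H p Hp; simpl in *.
  - contradiction.
  - apply in_app_or in Hp as [Hp|Hp].
    + apply (H f); [left; reflexivity | exact Hp].
    + apply IH; [intros g Hg; apply H; right; exact Hg | exact Hp].
Qed.

Lemma over_agree VA L A T v w :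
  over VA L -> agree_out (elimvars A T VA) v w -> eval w L = eval v L.
Proof.
  intros HL Hw. apply eval_agree. intros p Hp. apply Hw.
  unfold elimvars. rewrite filter_In. rewrite (HL p Hp). simpl. intros [_ F]; discriminate.
Qed.

Theorem mainTheorem4 (TS TB : theory) (VA : varset) (Tl Tu : theory) :
  alpha_abstraction TS TB VA Tl Tu ->
  models (thy TB) (Iff (thy Tl) (thy Tu)) ->
  models (thy TB) (Iff (thy Tl) (wsc (thy TS) (thy TB) VA)) /\
  models (thy TB) (Iff (thy Tu) (snc (thy TS) (thy TB) VA)) /\
  (forall C : form, over VA C ->
     (models (thy TB) (Imp C (thy TS)) <-> models (thy TB) (Imp C (thy Tl)))) /\
  (forall D : form, over VA D ->
     (models (thy TB) (Imp (thy TS) D) <-> models (thy TB) (Imp (thy Tu) D))).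
Proof.
  intros [HlO [HuO [Ha Hb]]] Heq.
  apply thy_over in HlO. apply thy_over in HuO.
  assert (HLS : models (thy TB) (Imp (thy Tl) (thy TS))).
  { apply Ha; auto. intros v _. simpl. destruct (eval v (thy Tl)); reflexivity. }
  assert (HSU : models (thy TB) (Imp (thy TS) (thy Tu))).
  { apply Hb; auto. intros v _. simpl. destruct (eval v (thy Tu)); reflexivity. }
  unfold models in *; simpl in *.
  assert (E1 : forall v, eval v (thy TB) = true -> eval v (thy TS) = eval v (thy Tl)).
  { intros v Hv. specialize (HLS v Hv). specialize (HSU v Hv). specialize (Heq v Hv).
    destruct (eval v (thy TS)), (eval v (thy Tl)), (eval v (thy Tu)); simpl in *; congruence. }
  assert (E2 : forall v, eval v (thy TB) = true -> eval v (thy Tu) = eval v (thy Tl)).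
  { intros v Hv. specialize (Heq v Hv).
    destruct (eval v (thy Tl)), (eval v (thy Tu)); simpl in *; congruence. }
  split; [|split; [|split]].
  - intros v Hv. unfold wsc.
    destruct (eval v (thy Tl)) eqn:HL.
    + assert (eval v (allV (elimvars (thy TS) (thy TB) VA) (Imp (thy TB) (thy TS))) = true)
        as ->; auto.
      apply allV_sem. intros w Hw. simpl.
      destruct (eval w (thy TB)) eqn:HB; auto. simpl.
      rewrite E1 by auto. rewrite (over_agree VA _ (thy TS) (thy TB) v w); auto.
    + destruct (eval v (allV (elimvars (thy TS) (thy TB) VA) (Imp (thy TB) (thy TS)))) eqn:HA;
        auto.
      apply allV_sem with (w := v) in HA; [|intros q _; auto].
      simpl in HA. rewrite Hv in HA. simpl in HA. rewrite E1 in HA by auto. congruence.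
  - intros v Hv. unfold snc.
    destruct (eval v (thy Tu)) eqn:HU.
    + assert (eval v (exV (elimvars (thy TS) (thy TB) VA) (And (thy TB) (thy TS))) = true)
        as ->; auto.
      apply exV_sem. exists v. split; [intros q _; auto|]. simpl.
      rewrite Hv. simpl. rewrite E1 by auto. rewrite <- E2 by auto. auto.
    + destruct (eval v (exV (elimvars (thy TS) (thy TB) VA) (And (thy TB) (thy TS)))) eqn:HE;
        auto.
      apply exV_sem in HE as [w [Hw HE]]. simpl in HE.
      apply andb_true_iff in HE as [HB HS].
      rewrite E1 in HS by auto. rewrite <- E2 in HS by auto.
      rewrite (over_agree VA _ (thy TS) (thy TB) v w) in HS; auto. congruence.
  - intros C _; split; intros H v Hv; specialize (H v Hv);
      [rewrite <- E1 by auto | rewrite E1 by auto]; auto.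
  - intros D _; split; intros H v Hv; specialize (H v Hv);
      [rewrite E2 by auto; rewrite <- E1 by auto | rewrite E1 by auto; rewrite <- E2 by auto];
      auto.
Qed.
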